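(* For every $n\geq1$, the number of $n$-multisets of $[n]$ in which no integer other than $n$ occurs exactly once equals the coefficient of $z^n$ in $\frac{1-3z-\sqrt{1-2z-3z^2}}{6z-2}$, i.e. the $n$-th term of OEIS sequence A005773 ($1,1,2,5,13,35,96,\dots$ indexed from $n=0$).
   Context: An $n$-multiset of $[n]=\{1,\dots,n\}$ is a collection of $n$ elements of $[n]$ in which elements may be repeated; the multiplicity of an integer is the number of times it occurs. The condition is that every $j\in\{1,\dots,n-1\}$ has multiplicity different from $1$ (the multiplicity of $n$ is unrestricted). *)

(* Defs.v *)
From mathcomp Require Import all_boot all_order all_algebra.
Set Implicit Arguments. Unset Strict Implicit. Unset Printing Implicit Defensive.
Import Order.TTheory GRing.Theory Num.Theory.

(* An n-multiset of [n] = {1,...,n} is encoded by its multiplicity function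
   m : 'I_n -> nat (ordinal i stands for the integer i+1), with total size n.
   Multiplicities are at most n, so m is a finite function into 'I_n.+1. *)
Definition multiset_size n (m : {ffun 'I_n -> 'I_n.+1}) : nat :=
  \sum_(i < n) (m i : nat).

Definition no_single_below_n n (m : {ffun 'I_n -> 'I_n.+1}) : bool :=
  [forall i : 'I_n, (i.+1 != n) ==> ((m i : nat) != 1)].

Definition count_multisets (n : nat) : nat :=
  #|[set m : {ffun 'I_n -> 'I_n.+1} | (multiset_size m == n) && no_single_below_n m]|.

Local Open Scope ring_scope.

Definition series := nat -> rat.

Definition conv (a b : series) : series :=
  fun n => \sum_(i < n.+1) a i * b (n - i)%N.

Definition poly_disc : series :=
  fun n => if n == 0%N then 1 else if n == 1%N then -2 else if n == 2%N then -3 else 0.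
Definition poly_num : series :=
  fun n => if n == 0%N then 1 else if n == 1%N then -3 else 0.
Definition poly_den : series :=
  fun n => if n == 0%N then -2 else if n == 1%N then 6 else 0.

Definition is_sqrt_disc (d : series) : Prop :=
  d 0%N = 1 /\ forall n, conv d d n = poly_disc n.

(* y = (1 - 3z - d)/(6z - 2), i.e. (6z - 2) * y = 1 - 3z - d as formal power
   series (6z - 2 is invertible since its constant term is nonzero). *)
Definition is_gf (d y : series) : Prop :=
  forall n, conv poly_den y n = poly_num n - d n.

(* Main.v *)
Require Import Defs.
From mathcomp Require Import all_boot all_order all_algebra.
From mathcomp Require Import ring lra zify.
Import Order.TTheory GRing.Theory Num.Theory.
Local Open Scope ring_scope.

Definition Fi n (i : 'I_n) (j : 'I_n.+1) : {poly rat} :=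
  if (i.+1 != n) ==> ((j : nat) != 1%N) then 'X^j else 0.

Arguments Fi {n}.

Lemma count_poly n : (count_multisets n)%:R =
  (\prod_(i < n) \sum_(j < n.+1) Fi i j)`_n.
Proof.
rewrite bigA_distr_bigA /= coef_sum.
have E : forall f : {ffun 'I_n -> 'I_n.+1},
  (\prod_i Fi i (f i))`_n = ((multiset_size f == n) && no_single_below_n f)%:R.
  move=> f; rewrite /no_single_below_n /multiset_size.
  case: (boolP [forall i, _]) => H.
    rewrite andbT (eq_bigr (fun i => 'X^(f i))); last first.
      by move=> i _; rewrite /Fi (forallP H i).
    by rewrite prodrXr coefXn eq_sym.
  rewrite andbF; move/forallPn: H => [i Hi].
  by rewrite (bigD1 i) //= /Fi (negbTE Hi) mul0r coef0.
rewrite (eq_bigr _ (fun f _ => E f)).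
rewrite /count_multisets cardsE -sum1_card natr_sum.
rewrite big_mkcond /=.
by apply: eq_bigr => f _; rewrite unfold_in; case: (_ && _).
Qed.

Definition Hs k : {poly rat} := \sum_(j < k.+2) 'X^j.

Lemma sum_Fi k (i : 'I_k.+1) : (i < k)%N ->
  \sum_(j < k.+2) Fi i j = Hs k - 'X.
Proof.
move=> ik.
rewrite /Hs [in RHS](bigD1 (@Ordinal k.+2 1 isT)) //= expr1 addrC addrK.
rewrite [in LHS](bigD1 (@Ordinal k.+2 1 isT)) //=.
rewrite {1}/Fi /= eqSS (ltn_eqF ik) /= add0r.
apply: eq_bigr => j /negPf Hj.
rewrite /Fi /= eqSS (ltn_eqF ik) /=.
suff -> : ((j : nat) != 1%N) by [].
by apply/negP => /eqP E; move: Hj; rewrite -val_eqE /= E eqxx.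
Qed.

Lemma prod_Fi k : \prod_(i < k.+1) \sum_(j < k.+2) Fi i j = (Hs k - 'X)^+k * Hs k.
Proof.
rewrite big_ord_recr /=; congr (_ * _).
  rewrite (eq_bigr (fun _ => Hs k - 'X)); last by move=> i _; apply: sum_Fi => /=.
  by rewrite prodr_const card_ord.
by apply: eq_bigr => j _; rewrite /Fi /= eqxx.
Qed.

Lemma coef1X m i : (((1 + 'X) ^+ m : {poly rat})`_i) = 'C(m, i)%:R.
Proof.
elim: m i => [|m IH] i; first by rewrite expr0 coef1 bin0n.
rewrite exprS mulrDl mul1r coefD coefXM IH.
by case: i => [|i] //=; rewrite ?bin0 ?addr0 // IH binS natrD.
Qed.

Lemma coefHs0 k i : (i <= k.+1)%N -> (Hs k)`_i = 1.
Proof.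
move=> Hi; rewrite /Hs coef_sum (bigD1 (@Ordinal k.+2 i Hi)) //= coefXn eqxx.
rewrite big1 ?addr0 // => j Hj; rewrite coefXn.
by case: eqP => // E; move: Hj; rewrite -val_eqE /= E eqxx.
Qed.

Lemma hockey p i : \sum_(l < i.+1) ('C(l + p, l)%:R : rat) = 'C(i + p.+1, i)%:R.
Proof.
elim: i => [|i IH]; first by rewrite big_ord1 !bin0.
rewrite big_ord_recr /= IH -natrD; congr (_%:R).
by rewrite !addSn !addnS binS addnC.
Qed.

Lemma coefHs k p i : (i <= k.+1)%N -> (Hs k ^+ p.+1)`_i = 'C(i + p, i)%:R.
Proof.
elim: p i => [|p IH] i Hi; first by rewrite expr1 coefHs0 // addn0 binn.
rewrite exprSr coefM -hockey; apply: eq_bigr => l _.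
rewrite IH; last by apply: leq_trans Hi; rewrite -ltnS.
by rewrite coefHs0 ?mulr1 // (leq_trans (leq_subr _ _) Hi).
Qed.

Definition Qp : {poly rat} := 1 + 'X + 'X^2.

Lemma c_trin k : ((Hs k - 'X)^+k * Hs k)`_(k.+1) = ((1 + 'X) * Qp^+k)`_(k.+1).
Proof.
have -> : Qp = (1+'X)^+2 - 'X by rewrite /Qp; ring.
rewrite !exprBn mulr_suml mulr_sumr !coef_sum; apply: eq_bigr => [[j /= Hj]] _.
have -> : (-1) ^+ j * Hs k ^+ (k - j) * 'X ^+ j *+ 'C(k, j) * Hs k =
   ((-1) ^+ j *+ 'C(k, j))%:P * ('X^j * Hs k ^+ (k - j).+1).
  by rewrite polyCMn rmorphXn /= polyCN polyC1 exprS; ring.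
have -> : (1 + 'X : {poly rat}) * ((-1) ^+ j * ((1 + 'X) ^+ 2) ^+ (k - j) * 'X ^+ j *+ 'C(k, j)) =
   ((-1) ^+ j *+ 'C(k, j))%:P * ('X^j * (1 + 'X) ^+ (2 * (k - j)).+1).
  by rewrite polyCMn rmorphXn /= polyCN polyC1 -exprM exprS; ring.
rewrite !coefCM !coefXnM ltnNge (ltnW Hj) /=.
rewrite coefHs ?leq_subr // coef1X; congr (_ * _%:R); congr 'C(_, _).
lia.
Qed.

Lemma coefQ (p : {poly rat}) m : (Qp * p)`_(m.+2) = p`_(m.+2) + p`_(m.+1) + p`_m.
Proof.
rewrite /Qp !mulrDl mul1r !coefD coefXM coefXnM /=.
by rewrite subn2.
Qed.

Lemma coef1XM (p : {poly rat}) i : ((1 + 'X) * p)`_(i.+1) = p`_(i.+1) + p`_i.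
Proof. by rewrite mulrDl mul1r coefD coefXM. Qed.

Lemma coefX2 (p : {poly rat}) i : ('X^2 * p)`_(i.+2) = p`_i.
Proof. by rewrite coefXnM /= subn2. Qed.

Lemma coefXQd (p : {poly rat}) t : ('X * Qp * p^`())`_(t.+2) =
  p`_(t.+2) *+ t.+2 + p`_(t.+1) *+ t.+1 + p`_t *+ t.
Proof.
rewrite -mulrA mulrCA coefQ !coefXM /= !coef_deriv.
by case: t => [|t] //=; rewrite mulr0n.
Qed.

Lemma deriv_rel L :
  'X * Qp * ('X^2 * Qp^+L)^`() = (Qp * ('X^2 * Qp^+L)) *+ 2 + 'X * Qp^`() * ('X^2 * Qp^+L) *+ L.
Proof.
rewrite derivM derivXn deriv_exp /=.
case: L => [|L]; first by rewrite expr0 !mulr0n !mulr0 !addr0 mulr1; ring.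
rewrite -pred_Sn !exprS; ring.
Qed.

Lemma dQ : Qp^`() = 1 + 'X *+ 2.
Proof. by rewrite /Qp !derivE /= expr1 add0r. Qed.

Lemma coefXdQ (p : {poly rat}) t : ('X * Qp^`() * p)`_(t.+2) = p`_(t.+1) + p`_t *+ 2.
Proof.
rewrite dQ mulrDr mulr1 mulrDl coefD coefXM /=; congr (_ + _).
by rewrite mulrnAr mulrnAl coefMn -expr2 coefXnM /= subn2.
Qed.

Lemma relW L t (w := fun i => ('X^2 * Qp^+L)`_i) :
  w t.+2 *+ t.+2 + w t.+1 *+ t.+1 + w t *+ t =
  (w t.+2 + w t.+1 + w t) *+ 2 + (w t.+1 + w t *+ 2) *+ L.
Proof.
have := congr1 (fun p : {poly rat} => p`_(t.+2)) (deriv_rel L) => /=.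
by rewrite coefXQd coefD !coefMn coefQ coefXdQ.
Qed.

Lemma relW' L t (w := fun i => ('X^2 * Qp^+L)`_i) :
  w t.+2 * (t.+2)%:R + w t.+1 * (t.+1)%:R + w t * t%:R =
  (w t.+2 + w t.+1 + w t) * 2 + (w t.+1 + w t * 2) * L%:R.
Proof. by rewrite !mulr_natr; exact: relW. Qed.

Definition cc n := ((1 + 'X) * Qp^+(n.-1))`_n.

Lemma cc_rec L : (L.+3)%:R * cc L.+3 = 2 * (L.+3)%:R * cc L.+2 + 3 * (L.+1)%:R * cc L.+1.
Proof.
set W := 'X^2 * Qp^+L.
have E1 : forall i, (Qp^+L)`_i = W`_(i.+2) by move=> i; rewrite coefX2.
have E2 : forall i, (Qp^+L.+1)`_i = (Qp * W)`_(i.+2).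
  have P2 : 'X^2 * Qp^+L.+1 = Qp * W by rewrite /W (exprS Qp); ring.
  by move=> i; rewrite -coefX2 P2.
have E3 : forall i, (Qp^+L.+2)`_i = (Qp * (Qp * W))`_(i.+2).
  have P3 : 'X^2 * Qp^+L.+2 = Qp * (Qp * W) by rewrite /W !(exprS Qp); ring.
  by move=> i; rewrite -coefX2 P3.
rewrite /cc /= !coef1XM !E1 E2 E2 E3 E3 !coefQ.
have R0 := relW' L L. have R1 := relW' L L.+1. have R2 := relW' L L.+2.
have R3 := relW' L L.+3. rewrite -/W /= in R0 R1 R2 R3.
move: R0 R1 R2 R3; rewrite -!natr1.
set l := L%:R.
set w0 := W`_L. set w1 := W`_L.+1. set w2 := W`_L.+2. set w3 := W`_L.+3.
set w4 := W`_L.+4. set w5 := W`_L.+1.+4.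
move=> R0 R1 R2 R3.
have l0 : 0 <= l by rewrite /l ler0n.
have S1 : w3 = w1.
  have H : (l + 1) * (w3 - w1) = 0 by lra.
  have : l + 1 != 0 by apply/eqP => h; lra.
  by move=> /mulfI; apply; apply/eqP; rewrite -subr_eq0 -mulrBr H.
rewrite S1 in R0 R1 R2 R3 *.
have S2 : w4 = w0.
  have H : (l + 2) * (w4 - w0) = 0 by lra.
  have : l + 2 != 0 by apply/eqP => h; lra.
  by move=> /mulfI; apply; apply/eqP; rewrite -subr_eq0 -mulrBr H.
rewrite S2 in R0 R1 R2 R3 *.
lra.
Qed.

Definition eqm N (p q : {poly rat}) := forall i, (i < N)%N -> p`_i = q`_i.

Lemma eqm_refl N p : eqm N p p. Proof. by []. Qed.
Lemma eqm_sym N p q : eqm N p q -> eqm N q p.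
Proof. by move=> h i hi; rewrite h. Qed.
Lemma eqm_trans N p q r : eqm N p q -> eqm N q r -> eqm N p r.
Proof. by move=> h1 h2 i hi; rewrite h1 // h2. Qed.
Lemma eqm_add N p q p' q' : eqm N p p' -> eqm N q q' -> eqm N (p + q) (p' + q').
Proof. by move=> h1 h2 i hi; rewrite !coefD h1 // h2. Qed.
Lemma eqm_sub N p q p' q' : eqm N p p' -> eqm N q q' -> eqm N (p - q) (p' - q').
Proof. by move=> h1 h2 i hi; rewrite !coefB h1 // h2. Qed.
Lemma eqm_mul N p q p' q' : eqm N p p' -> eqm N q q' -> eqm N (p * q) (p' * q').
Proof.
move=> h1 h2 i hi; rewrite !coefM; apply: eq_bigr => [[j /= hj]] _.
rewrite h1 ?h2 //; first by apply: leq_ltn_trans hi; rewrite leq_subr.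
by apply: leq_ltn_trans hi; rewrite -ltnS.
Qed.
Lemma eqm_le N M p q : (M <= N)%N -> eqm N p q -> eqm M p q.
Proof. by move=> hMN h i hi; apply: h; apply: leq_trans hMN. Qed.
Lemma eqm_deriv N p q : eqm N.+1 p q -> eqm N p^`() q^`().
Proof. by move=> h i hi; rewrite !coef_deriv h. Qed.
Lemma eqm_eq N p q : p = q -> eqm N p q.
Proof. by move=> ->. Qed.

Lemma eqm_cancel N (p q : {poly rat}) : p`_0 != 0 -> eqm N (p * q) 0 -> eqm N q 0.
Proof.
move=> p0 h; elim/ltn_ind => i IH hi.
have := h i hi; rewrite coefM coef0 big_ord_recl /= subn0.
rewrite big1 ?addr0; last first.
  move=> [j hj] _ /=; rewrite IH ?coef0 ?mulr0 //; rewrite /bump /=; lia.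
by move/eqP; rewrite mulf_eq0 (negbTE p0) /= ?coef0 => /eqP.
Qed.

Arguments eqm_sym {N p q}. Arguments eqm_trans {N p q r}.
Arguments eqm_add {N p q p' q'}. Arguments eqm_sub {N p q p' q'}.
Arguments eqm_mul {N p q p' q'}. Arguments eqm_le {N M p q}.
Arguments eqm_deriv {N p q}. Arguments eqm_cancel {N p q}. Arguments eqm_eq {N p q}.

Definition tr N (s : series) : {poly rat} := \poly_(i < N) s i.

Lemma tr_conv N a b i : (i < N)%N -> (tr N a * tr N b)`_i = conv a b i.
Proof.
move=> hi; rewrite coefM /conv; apply: eq_bigr => [[j /= hj]] _.
rewrite !coef_poly (leq_ltn_trans _ hi) ?leq_subr //.
by rewrite (leq_ltn_trans (leq_subr j i) hi).
Qed.

Definition Pdisc : {poly rat} := 1 - 'X *+ 2 - 'X^2 *+ 3.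
Definition Pden : {poly rat} := 'X *+ 6 - 1 *+ 2.
Definition Pnum : {poly rat} := 1 - 'X *+ 3.

Lemma PdiscE i : Pdisc`_i = poly_disc i.
Proof.
rewrite /Pdisc /poly_disc !coefB !coefMn coef1 coefX coefXn.
by case: i => [|[|[|i]]] /=; rewrite ?mul0rn ?subr0 ?sub0r ?add0r //=; lra.
Qed.

Lemma PdenE i : Pden`_i = poly_den i.
Proof.
rewrite /Pden /poly_den !coefB !coefMn coef1 coefX.
by case: i => [|[|i]] /=; rewrite ?mul0rn ?subr0 ?sub0r //=; lra.
Qed.

Lemma PnumE i : Pnum`_i = poly_num i.
Proof.
rewrite /Pnum /poly_num !coefB !coefMn coef1 coefX.
by case: i => [|[|i]] /=; rewrite ?mul0rn ?subr0 ?sub0r //=; lra.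
Qed.

Lemma y0 d y : is_sqrt_disc d -> is_gf d y -> y 0%N = 0.
Proof.
move=> [hd0 hdd] hg; have := hg 0%N.
rewrite /conv big_ord1 /= hd0 /poly_den /poly_num /= => h.
lra.
Qed.

Lemma y1 d y : is_sqrt_disc d -> is_gf d y -> y 1%N = 1.
Proof.
move=> [hd0 hdd] hg; have := hg 1%N; have := hdd 1%N; have := hg 0%N.
rewrite /conv !big_ord_recr !big_ord0 /= hd0 /poly_den /poly_num /poly_disc /=.
move=> h0 h1 h2; lra.
Qed.

Lemma eqm_tr N (s : series) (P : {poly rat}) : (forall i, P`_i = s i) -> eqm N (tr N s) P.
Proof. by move=> h i hi; rewrite coef_poly hi h. Qed.

Lemma y_ode d y : is_sqrt_disc d -> is_gf d y -> forall M,
  let Dp := 1 + tr M.+1 y *+ 2 in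
  eqm M ((1 + 'X) * (1 - 'X *+ 3) * Dp^`() - Dp *+ 2) 0.
Proof.
move=> hs hg M Dp; rewrite {}/Dp; have [hd0 hdd] := hs.
set N := M.+1; set dp := tr N d; set yp := tr N y; set Dp := 1 + yp *+ 2.
have ha : eqm N (dp * dp) Pdisc by move=> i hi; rewrite tr_conv // hdd PdiscE.
have hb : eqm N (Pden * yp) (Pnum - dp).
  move=> i hi; rewrite -(eqm_mul (@eqm_tr N poly_den Pden PdenE) (eqm_refl N yp)) //.
  by rewrite tr_conv // hg coefB coef_poly hi PnumE.
have hc : eqm N dp ((1 - 'X *+ 3) * Dp).
  apply: (@eqm_trans _ _ (Pnum - Pden * yp)).
    apply: eqm_sym; apply: eqm_trans (eqm_sub (eqm_refl N Pnum) hb) _.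
    by apply: eqm_eq; ring.
  by apply: eqm_eq; rewrite /Pnum /Pden /Dp; ring.
have hd : eqm N ((1 - 'X *+ 3) * ((1 - 'X *+ 3) * Dp^+2 - (1 + 'X))) 0.
  apply: (@eqm_trans _ _ (((1 - 'X *+ 3) * Dp) * ((1 - 'X *+ 3) * Dp) - Pdisc)).
    by apply: eqm_eq; rewrite /Pdisc; ring.
  apply: (@eqm_trans _ _ (Pdisc - Pdisc)); last by rewrite subrr.
  apply: eqm_sub (eqm_refl _ _).
  by apply: eqm_trans ha; apply: eqm_mul; apply: eqm_sym.
have he : eqm N ((1 - 'X *+ 3) * Dp^+2 - (1 + 'X)) 0.
  apply: eqm_cancel hd; rewrite coefB coefMn coef1 coefX /=; lra.
have hf := eqm_deriv he.
have hg2 : eqm M ((Dp * ((1 + 'X) * (1 - 'X *+ 3) * Dp^`() - Dp *+ 2)) *+ 2) 0.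
  apply: (@eqm_trans _ _ ((1 + 'X) * ((1 - 'X *+ 3) * Dp^+2 - (1 + 'X))^`()
                           - ((1 - 'X *+ 3) * Dp^+2 - (1 + 'X)))).
    by apply: eqm_eq; rewrite !derivE; ring.
  rewrite -[0 in X in eqm _ _ X](subrr 0).
  apply: eqm_sub; last by apply: eqm_le (leqnSn _) he.
  rewrite -[0 in X in eqm _ _ X](mulr0 (1 + 'X)).
  apply: eqm_mul; first exact: eqm_refl.
  by move=> i hi; rewrite hf // coef_deriv !coef0 mul0rn.
have hh : eqm M (Dp * ((1 + 'X) * (1 - 'X *+ 3) * Dp^`() - Dp *+ 2)) 0.
  move=> i hi; have := hg2 i hi; rewrite coefMn coef0 => /eqP.
  by rewrite mulrn_eq0 /= => /eqP.
apply: eqm_cancel hh.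
rewrite /Dp coefD coefMn coef1 coef_poly /= (y0 d y hs hg); lra.
Qed.

Lemma coefE (p : {poly rat}) m :
  ((1 + 'X) * (1 - 'X *+ 3) * p^`() - p *+ 2)`_(m.+1) =
  p`_(m.+2) * (m.+2)%:R - p`_(m.+1) * (m.+1)%:R * 2
  - (if m is m'.+1 then p`_m * m%:R * 3 else 0) - p`_(m.+1) * 2.
Proof.
have -> : (1 + 'X) * (1 - 'X *+ 3) * p^`() - p *+ 2 =
   p^`() - ('X * p^`()) *+ 2 - ('X^2 * p^`()) *+ 3 - p *+ 2 by ring.
rewrite !coefB !coefMn coefXM coefXnM !coef_deriv /=.
case: m => [|m] /=; first by ring.
by rewrite subn2 /=; ring.
Qed.

Lemma y_rec d y : is_sqrt_disc d -> is_gf d y -> forall m,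
  (m.+2)%:R * y m.+2 = 2 * (m.+2)%:R * y m.+1 + 3 * m%:R * y m.
Proof.
move=> hs hg m.
have := y_ode d y hs hg m.+2 => /= /(_ m.+1 (ltnSn _)).
rewrite coefE coef0.
have DE : forall i, (i < m.+3)%N -> (1 + tr m.+3 y *+ 2)`_i = (i == 0%N)%:R + y i * 2.
  by move=> i hi; rewrite coefD coef1 coefMn coef_poly hi mulr_natr.
rewrite !DE //=.
clear DE; case: m => [|m] /=; rewrite -!natr1 => h; lra.
lia.
Qed.

Lemma count_cc k : (count_multisets k.+1)%:R = cc k.+1.
Proof. by rewrite count_poly prod_Fi c_trin /cc. Qed.

Lemma cc1 : cc 1 = 1.
Proof. by rewrite /cc /= coef1XM expr0 !coef1 /=; lra. Qed.

Lemma cc2 : cc 2 = 2.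
Proof.
rewrite /cc /= coef1XM expr1 /Qp !coefD !coef1 !coefX !coefXn /=.
lra.
Qed.

Theorem theorem4 (d y : series) :
  is_sqrt_disc d -> is_gf d y ->
  forall n : nat, (1 <= n)%N -> (count_multisets n)%:R = y n.
Proof.
move=> hs hg [|n] // _; rewrite count_cc.
have Y1 := y1 d y hs hg.
have Y2 : y 2%N = 2.
  have := y_rec d y hs hg 0; rewrite Y1 mulr0 mul0r addr0 => h.
  by apply: (mulfI (_ : (2%:R : rat) != 0)) => //; rewrite h mulr1.
suff : cc n.+1 = y n.+1 /\ cc n.+2 = y n.+2 by case.
elim: n => [|n [IH1 IH2]]; first by rewrite cc1 cc2 Y1 Y2.
split => //.
have := cc_rec n; have := y_rec d y hs hg n.+1.
rewrite IH1 IH2 => <-.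
apply: mulfI; by rewrite pnatr_eq0.
Qed.
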